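(* Let $\mathbb X,\mathbb Y_1,\mathbb Y_2,\mathbb X^\sharp,\mathbb Y_1^\sharp,\mathbb Y_2^\sharp$ be sets with couplings $c:\mathbb X\times\mathbb X^\sharp\to\overline{\mathbb R}$, $d_1:\mathbb Y_1\times\mathbb Y_1^\sharp\to\overline{\mathbb R}$, $d_2:\mathbb Y_2\times\mathbb Y_2^\sharp\to\overline{\mathbb R}$, and let $\phi:\mathbb Y_1\times\mathbb X\times\mathbb Y_2\to\overline{\mathbb R}$. Define $\phi^\sharp:\mathbb Y_1^\sharp\times\mathbb X^\sharp\times\mathbb Y_2^\sharp\to\overline{\mathbb R}$ by $$\phi^\sharp(y_1^\sharp,x^\sharp,y_2^\sharp)=\sup_{(y_1,x,y_2)\in\mathbb Y_1\times\mathbb X\times\mathbb Y_2}\Big(c(x,x^\sharp)\mathbin{\underset{\cdot}{+}} d_1(y_1,y_1^\sharp)\mathbin{\underset{\cdot}{+}} d_2(y_2,y_2^\sharp)\mathbin{\underset{\cdot}{+}}\big(-\phi(y_1,x,y_2)\big)\Big).$$ Then for all $f:\mathbb X\to\overline{\mathbb R}$, $g_1:\mathbb Y_1\to\overline{\mathbb R}$, $g_2:\mathbb Y_2\to\overline{\mathbb R}$: if $f(x)\ge (g_1\square^{\phi} g_2)(x)$ for all $x\in\mathbb X$, then $f^{c}(x^\sharp)\le\big(g_1^{-d_1}\square^{\phi^\sharp}g_2^{-d_2}\big)(x^\sharp)$ for all $x^\sharp\in\mathbb X^\sharp$.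
   Context: $\overline{\mathbb R}=[-\infty,+\infty]$. The Moreau lower addition $\mathbin{\underset{\cdot}{+}}$ is usual addition extended by $(+\infty)\mathbin{\underset{\cdot}{+}}(-\infty)=(-\infty)\mathbin{\underset{\cdot}{+}}(+\infty)=-\infty$; the Moreau upper addition $\mathbin{\overset{\cdot}{+}}$ is usual addition extended by $(+\infty)\mathbin{\overset{\cdot}{+}}(-\infty)=(-\infty)\mathbin{\overset{\cdot}{+}}(+\infty)=+\infty$. Generalized inf-convolution: for sets $A,B,C$, a function $\psi:A\times B\times C\to\overline{\mathbb R}$ and $h_1:A\to\overline{\mathbb R}$, $h_2:C\to\overline{\mathbb R}$, $(h_1\square^{\psi}h_2)(b)=\inf_{a\in A,\,z\in C}\big(h_1(a)\mathbin{\overset{\cdot}{+}}\psi(a,b,z)\mathbin{\overset{\cdot}{+}} h_2(z)\big)$. Conjugates: $f^{c}(x^\sharp)=\sup_{x}\big(c(x,x^\sharp)\mathbin{\underset{\cdot}{+}}(-f(x))\big)$ and $g_i^{-d_i}(y_i^\sharp)=\sup_{y_i}\big((-d_i(y_i,y_i^\sharp))\mathbin{\underset{\cdot}{+}}(-g_i(y_i))\big)$. *)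

(* Defs.v *)
From mathcomp Require Import all_boot all_order all_algebra.
From mathcomp Require Import all_classical all_reals ereal.
Set Implicit Arguments. Unset Strict Implicit. Unset Printing Implicit Defensive.
Import Order.TTheory GRing.Theory Num.Theory.
Local Open Scope classical_set_scope.
Local Open Scope ereal_scope.

(* Moreau lower addition  = mathcomp's [adde]      ((x + y)%E,  +oo + -oo = -oo)
   Moreau upper addition  = mathcomp's [dual_adde] ((x + y)%dE, +oo + -oo = +oo) *)
Definition lower_add {R : realType} (a b : \bar R) : \bar R := (a + b)%E.
Definition upper_add {R : realType} (a b : \bar R) : \bar R := (a + b)%dE.

Lemma lower_add_check {R : realType} : lower_add (+oo : \bar R) -oo = -oo.
Proof. by []. Qed.
Lemma upper_add_check {R : realType} : upper_add (+oo : \bar R) -oo = +oo.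
Proof. by []. Qed.

Definition infconv {R : realType} {A B C : Type}
  (psi : A -> B -> C -> \bar R) (h1 : A -> \bar R) (h2 : C -> \bar R) (b : B)
  : \bar R :=
  ereal_inf [set t | exists a z, t = upper_add (upper_add (h1 a) (psi a b z)) (h2 z)].

Definition cconj {R : realType} {X Xs : Type} (c : X -> Xs -> \bar R)
  (f : X -> \bar R) (xs : Xs) : \bar R :=
  ereal_sup (range (fun x => lower_add (c x xs) (- f x))).

Definition negconj {R : realType} {Y Ys : Type} (d : Y -> Ys -> \bar R)
  (g : Y -> \bar R) (ys : Ys) : \bar R :=
  ereal_sup (range (fun y => lower_add (- d y ys) (- g y))).

Definition phisharp {R : realType} {X Y1 Y2 Xs Y1s Y2s : Type}
  (c : X -> Xs -> \bar R) (d1 : Y1 -> Y1s -> \bar R) (d2 : Y2 -> Y2s -> \bar R)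
  (phi : Y1 -> X -> Y2 -> \bar R) (y1s : Y1s) (xs : Xs) (y2s : Y2s) : \bar R :=
  ereal_sup [set t | exists y1 x y2,
    t = lower_add (lower_add (lower_add (c x xs) (d1 y1 y1s)) (d2 y2 y2s))
                  (- phi y1 x y2)].

(* Main.v *)
Require Import Defs.
From mathcomp Require Import all_boot all_order all_algebra.
From mathcomp Require Import all_classical all_reals ereal.
From mathcomp Require Import lra.
Import Order.TTheory GRing.Theory Num.Theory.
Local Open Scope ereal_scope.

Lemma pw (R : realType) (c a p b d1 d2 : \bar R) :
  lower_add (lower_add (lower_add c a) p) b <=
  upper_add (upper_add (lower_add (- d1) a)
     (lower_add (lower_add (lower_add c d1) d2) p)) (lower_add (- d2) b).
Proof.
rewrite /lower_add /upper_add.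
case: c => [c||]; case: a => [a||]; case: p => [p||]; case: b => [b||];
case: d1 => [d1||]; case: d2 => [d2||]; rewrite /= ?leey ?leNye ?lee_fin //; try lra.
Qed.

Lemma supshift (R : realType) (c : \bar R) (S : set (\bar R)) (B : \bar R) :
  (forall s, S s -> c + s <= B) -> c + ereal_sup S <= B.
Proof.
case: c => [r||] H.
- have h : ereal_sup S <= B + (- r)%:E.
    apply: ge_ereal_sup => s Ss; move: (H s Ss); clear Ss.
    by case: s => [s||]; case: B {H} => [b||]; rewrite /= ?leey ?leNye ?lee_fin //; lra.
  apply: (le_trans (leeD2l r%:E h)).
  by case: B {H h} => [b||]; rewrite /= ?leey ?leNye ?lee_fin //; lra.
- case: B H => [b||] H; rewrite ?leey //.
  all: case E: (ereal_sup S) => [t||]; rewrite /= ?leNye //.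
  all: have hh : -oo < ereal_sup S by rewrite E ?ltNyr.
  all: have [s Ss lts] := ereal_sup_gt hh.
  all: by move: (H s Ss) lts; clear Ss; case: s.
Qed.

Theorem proposition1 (R : realType) (X Y1 Y2 Xs Y1s Y2s : Type)
  (c : X -> Xs -> \bar R) (d1 : Y1 -> Y1s -> \bar R) (d2 : Y2 -> Y2s -> \bar R)
  (phi : Y1 -> X -> Y2 -> \bar R)
  (f : X -> \bar R) (g1 : Y1 -> \bar R) (g2 : Y2 -> \bar R) :
  (forall x : X, infconv phi g1 g2 x <= f x) ->
  forall xs : Xs,
    cconj c f xs <= infconv (phisharp c d1 d2 phi) (negconj d1 g1) (negconj d2 g2) xs.
Proof.
move=> H xs.
apply: ge_ereal_sup => _ [x _ <-].
apply: le_ereal_inf_tmp => _ [y1s [y2s ->]].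
have step : forall y1 y2, c x xs +
   - (upper_add (upper_add (g1 y1) (phi y1 x y2)) (g2 y2)) <=
   upper_add (upper_add (negconj d1 g1 y1s) (phisharp c d1 d2 phi y1s xs y2s))
             (negconj d2 g2 y2s).
  move=> y1 y2.
  rewrite {1 2}/upper_add !DualAddTheoryNumDomain.dual_addeE !oppeK !addeA.
  have h := pw _ (c x xs) (- g1 y1) (- phi y1 x y2) (- g2 y2) (d1 y1 y1s) (d2 y2 y2s).
  rewrite {1}/lower_add in h. apply: (le_trans h).
  rewrite /upper_add; apply: DualAddTheoryRealDomain.lee_dD; first apply: DualAddTheoryRealDomain.lee_dD.
  - by apply: ereal_sup_ubound; exists y1.
  - by apply: ereal_sup_ubound; exists y1, x, y2.
  - by apply: ereal_sup_ubound; exists y2.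
have hf : - f x <= ereal_sup (-%E @` [set t | exists a z,
     t = upper_add (upper_add (g1 a) (phi a x z)) (g2 z)]).
  by rewrite ereal_supN leeN2; exact: H.
rewrite /lower_add; apply: le_trans (leeD2l _ hf) _.
apply: supshift => _ [_ [y1 [y2 ->]] <-].
exact: step.
Qed.
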